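(* Let $\mathbf{T}\in\{0,1\}^{n\times\ell}$ be a matrix all of whose columns are dirty, with $\delta(\mathbf{T})\le 2$. If $\ell\ge 5$, then there exists a vector $v\in\{0,1\}^\ell$ such that $d(v,\mathbf{T}[i])\le 1$ for all $i\in[n]$.
   Context: A column of a binary matrix is dirty if it contains both $0$ and $1$. $d$ denotes Hamming distance, $\mathbf{T}[i]$ is the $i$-th row of $\mathbf{T}$, and $\delta(\mathbf{T})=\max_{i\ne i'}d(\mathbf{T}[i],\mathbf{T}[i'])$. *)

(* Defs.v *)
From mathcomp Require Import all_boot all_order all_algebra.
Set Implicit Arguments. Unset Strict Implicit. Unset Printing Implicit Defensive.

Definition hamming (l : nat) (u v : 'I_l -> bool) : nat :=
  #|[set j : 'I_l | u j != v j]|.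

Definition rowv (n l : nat) (T : 'M[bool]_(n, l)) (i : 'I_n) : 'I_l -> bool :=
  fun j => T i j.

Definition dirty_col (n l : nat) (T : 'M[bool]_(n, l)) (j : 'I_l) : Prop :=
  (exists i, T i j = false) /\ (exists i, T i j = true).

Definition diam_le (n l : nat) (T : 'M[bool]_(n, l)) (k : nat) : Prop :=
  forall i i' : 'I_n, i != i' -> hamming (rowv T i) (rowv T i') <= k.

(* Main.v *)
Require Import Defs.
From mathcomp Require Import all_boot all_order all_algebra.
From mathcomp Require Import zify.

Lemma three_le {l : nat} {A : {set 'I_l}} {a b c : 'I_l} :
  a \in A -> b \in A -> c \in A -> a != b -> b != c -> c != a -> 2 < #|A|.
Proof. by move=> *; apply/card_gt2P; exists a, b, c. Qed.

Theorem lemma11 (n l : nat) (T : 'M[bool]_(n, l)) :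
  (forall j : 'I_l, dirty_col T j) ->
  diam_le T 2 ->
  5 <= l ->
  exists v : 'I_l -> bool, forall i : 'I_n, hamming v (rowv T i) <= 1.
Proof.
move=> hdirty hdiam hl.
have [i0 _] : exists i0 : 'I_n, True.
  have l0 : 0 < l by apply: leq_trans hl.
  by case: (hdirty (Ordinal l0)) => [[i _] _]; exists i.
set x := rowv T i0.
pose D i := [set j | x j != T i j].
have hH : forall i i', hamming (rowv T i) (rowv T i') <= 2.
  move=> i i'; case: (eqVneq i i') => [->|ne]; last exact: hdiam.
  rewrite /hamming; apply: leq_trans (leq0n 2) => //.
  by rewrite leqn0 cards_eq0; apply/eqP/setP => j; rewrite !inE eqxx.
have hD2 : forall i, #|D i| <= 2 by move=> i; exact: hH.
have meet : forall i i', 2 <= #|D i| -> 0 < #|D i'| ->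
    exists z, z \in D i /\ z \in D i'.
  move=> i i' h2 h1.
  case: (boolP [exists z, (z \in D i) && (z \in D i')]).
    by case/existsP => z /andP [? ?]; exists z.
  rewrite negb_exists => /forallP hno.
  have hI : D i :&: D i' = set0.
    by apply/setP => z; rewrite !inE; have := hno z; rewrite !inE => /negbTE ->.
  have hsub : D i :|: D i' \subset [set j | rowv T i j != rowv T i' j].
    apply/subsetP => z; have := hno z; rewrite !inE /x /rowv.
    by case: (T i0 z); case: (T i z); case: (T i' z).
  have := subset_leq_card hsub; have := hH i i'; rewrite /hamming.
  have := cardsUI (D i) (D i'); rewrite hI cards0 addn0 => ->.
  move=> a b; have := leq_trans b a; lia.
have cover : forall j, exists i, j \in D i.
  move=> j; case: (hdirty j) => [[i1 h1] [i2 h2]].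
  case hx: (x j).
    by exists i1; rewrite inE hx h1.
  by exists i2; rewrite inE hx h2.
case: (boolP [exists i, 2 <= #|D i|]); last first.
  rewrite negb_exists => /forallP hall.
  by exists x => i; have := hall i; rewrite -ltnNge ltnS.
case/existsP => a ha.
have : 1 < #|~: D a| by have := cardsC (D a); rewrite card_ord; have := hD2 a; lia.
case/card_gt1P => k1 [k2 [hk1 hk2 hk12]].
rewrite inE in hk1; rewrite inE in hk2.
case: (cover k1) => e1 he1; case: (cover k2) => e2 he2.
have [c [hca hce1]] : exists c, c \in D a /\ c \in D e1.
  by apply: meet => //; apply/card_gt0P; exists k1.
have hck1 : c != k1 by apply/eqP => E; subst; rewrite hca in hk1.
have hck2 : c != k2 by apply/eqP => E; subst; rewrite hca in hk2.
have P : forall i, 0 < #|D i| -> c \notin D i -> k1 \in D i.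
  move=> i hi hc.
  have [z [hz1 hz2]] : exists z, z \in D e1 /\ z \in D i.
    by apply: meet => //; apply/card_gt1P; exists c, k1.
  case: (eqVneq z k1) => [<- //|hzk].
  case: (eqVneq z c) => [E|hzc]; first by subst; rewrite hz2 in hc.
  have hkz : k1 != z by rewrite eq_sym.
  by have := three_le hce1 he1 hz1 hck1 hkz hzc; rewrite ltnNge hD2.
have Q : forall i, 0 < #|D i| -> k2 \in D i -> c \in D i.
  move=> i hi hk2i; apply/negPn/negP => hc.
  have hk1i := P i hi hc.
  have [y [hya hyi]] := meet a i ha hi.
  have hyk1 : y != k1 by apply/eqP => E; subst; rewrite hya in hk1.
  have hyk2 : y != k2 by apply/eqP => E; subst; rewrite hya in hk2.
  have hky : k2 != y by rewrite eq_sym.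
  by have := three_le hk1i hk2i hyi hk12 hky hyk1; rewrite ltnNge hD2.
have hce2 : c \in D e2 by apply: Q => //; apply/card_gt0P; exists k2.
have R : forall i, 0 < #|D i| -> c \in D i.
  move=> i hi; apply/negPn/negP => hc.
  have hk1i := P i hi hc.
  have hke2 : 1 < #|D e2| by apply/card_gt1P; exists c, k2.
  have [z [hz1 hz2]] := meet e2 i hke2 hi.
  case: (eqVneq z c) => [E|hzc]; first by subst; rewrite hz2 in hc.
  case: (eqVneq z k2) => [E|hzk2].
    by subst; rewrite (Q i hi hz2) in hc.
  have hkz : k2 != z by rewrite eq_sym.
  by have := three_le hce2 he2 hz1 hck2 hkz hzc; rewrite ltnNge hD2.
exists (fun j => if j == c then ~~ x j else x j) => i.
rewrite /hamming.
case: (boolP (0 < #|D i|)) => hi.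
  have hci := R i hi.
  have hs : [set j | (if j == c then ~~ x j else x j) != rowv T i j] \subset D i :\ c.
    apply/subsetP => j; rewrite !inE.
    case: (eqVneq j c) => [->|hjc] //=.
    by move: hci; rewrite inE /rowv; case: (x c); case: (T i c).
  apply: leq_trans (subset_leq_card hs) _.
  by have := hD2 i; rewrite (cardsD1 c) hci add1n ltnS.
have : D i = set0 by apply/eqP; rewrite -cards_eq0; move: hi; rewrite lt0n negbK.
move/setP => hD.
have hs : [set j | (if j == c then ~~ x j else x j) != rowv T i j] \subset [set c].
  apply/subsetP => j; rewrite !inE.
  case: (eqVneq j c) => [->|hjc] //=.
  by have := hD j; rewrite !inE /rowv => ->.
by have := subset_leq_card hs; rewrite cards1.
Qed.
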